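(* Let $\frac12<s<1$, $M\in\mathbb R\setminus\{0\}$, let $\gamma=\gamma(s)\ge\pi/2$ be the gap constant, and let $c\in(0,\gamma)\cup(\gamma,\infty)$. Let $$\mathcal V=\left\{\sqrt{3\left(\frac{\mu_n^1}{2\rho_n^{1/(2s)}}\right)^2+\rho_n^{1-\frac1s}}:\ n\ge1\right\}.$$ (a) If $c\notin\mathcal V$, then for each $N\ge1$ there is $\upsilon=\upsilon(N,c)>0$ such that $|\lambda_n^j-\lambda_m^k|\ge\upsilon$ for all $(n,j),(m,k)\in S$ with $(n,j)\ne(m,k)$, $1\le|n|,|m|\le N$ and $j,k\in\{2,3\}$. (b) If $c\in\mathcal V$, then there is a unique $n_c\ge1$ such that $\lambda_{-n_c}^2=\lambda_{n_c}^3$, and for each $N\ge1$ there is $\upsilon=\upsilon(N,c)>0$ such that $|\lambda_n^j-\lambda_m^k|\ge\upsilon$ for all $(n,j),(m,k)\in S$ with $(n,j)\neq(m,k)$, $1\le|n|,|m|\le N$, $j,k\in\{2,3\}$, except for the pair $\{(n,j),(m,k)\}=\{(-n_c,2),(n_c,3)\}$.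
   Context: $(-d_x^2)^s$ denotes the fractional Laplacian; $0<\rho_1\le\rho_2\le\cdots\to\infty$ are the eigenvalues (with multiplicity) of its realization on $L^2(-1,1)$ with zero exterior Dirichlet condition. Standing facts used for $\frac12<s<1$: the eigenvalues $\rho_n$ are simple, and there is a constant $\gamma=\gamma(s)\ge\pi/2$ such that $\rho_{n+1}^{1/(2s)}-\rho_n^{1/(2s)}\ge\gamma$ for all $n$ large enough. Fix $M\in\mathbb R\setminus\{0\}$. For $n\ge1$, $\mu_n^1$ is the unique real root of $\mu^3+\rho_n\mu-M\rho_n=0$ (it lies strictly between $0$ and $M$), $\mu_n^2=-\frac{\mu_n^1}{2}+i\sqrt{3(\mu_n^1/2)^2+\rho_n}$ and $\mu_n^3=\overline{\mu_n^2}$. For $c\in\mathbb R$, $\mathbb Z^*=\mathbb Z\setminus\{0\}$, $S=\{(n,j):n\in\mathbb Z^*,\ j\in\{1,2,3\}\}$ and $\lambda_n^j=\mu_{|n|}^j+i\,\mathrm{sgn}(n)\,c\,\rho_{|n|}^{1/(2s)}$ for $(n,j)\in S$. *)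

(* Defs.v *)
From Stdlib Require Import Reals Lra Lia ZArith Classical ClassicalEpsilon.
Open Scope R_scope.

(* Complex numbers represented as pairs (real part, imaginary part). *)
Definition cdist (a b : R * R) : R :=
  sqrt ((fst a - fst b) ^ 2 + (snd a - snd b) ^ 2).

(* mu_n^1 : the (unique) real root of  x^3 + rho_n x - M rho_n = 0. *)
Definition mu1 (rho : nat -> R) (M : R) (n : nat) : R :=
  epsilon (inhabits 0%R) (fun x => x ^ 3 + rho n * x - M * rho n = 0).

Definition muC (rho : nat -> R) (M : R) (n : nat) (j : nat) : R * R :=
  match j with
  | 1%nat => (mu1 rho M n, 0)
  | 2%nat => (- mu1 rho M n / 2, sqrt (3 * (mu1 rho M n / 2) ^ 2 + rho n))
  | _ => (- mu1 rho M n / 2, - sqrt (3 * (mu1 rho M n / 2) ^ 2 + rho n))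
  end.

(* lambda_n^j = mu_{|n|}^j + i sgn(n) c rho_{|n|}^{1/(2s)}, n in Z\{0}. *)
Definition lam (rho : nat -> R) (M s c : R) (n : Z) (j : nat) : R * R :=
  let m := Z.to_nat (Z.abs n) in
  (fst (muC rho M m j),
   snd (muC rho M m j) + IZR (Z.sgn n) * c * Rpower (rho m) (1 / (2 * s))).

Definition inV (rho : nat -> R) (M s c : R) : Prop :=
  exists n : nat, (1 <= n)%nat /\
    c = sqrt (3 * (mu1 rho M n / (2 * Rpower (rho n) (1 / (2 * s)))) ^ 2
              + Rpower (rho n) (1 - 1 / s)).

(* Main.v *)
Require Import Defs.
From Stdlib Require Import Reals Lra Lia ZArith Classical ClassicalEpsilon List.
Open Scope R_scope.

Lemma cubic_root (r M : R) : 0 < r -> exists x, x ^ 3 + r * x - M * r = 0.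
Proof.
  intros Hr.
  set (L := Rabs M + 1).
  assert (HL1 : M < L) by (unfold L; pose proof (Rle_abs M); lra).
  assert (HL2 : - M < L) by (unfold L; pose proof (Rle_abs (-M)); rewrite Rabs_Ropp in *; lra).
  assert (HL0 : 0 < L) by (unfold L; pose proof (Rabs_pos M); lra).
  destruct (IVT (fun x => x^3 + r*x - M*r) (-L) L) as [z [_ Hz]].
  - intro; reg.
  - lra.
  - simpl. nra.
  - simpl. nra.
  - exists z; exact Hz.
Qed.

Lemma mu1_spec rho M n : 0 < rho n ->
  mu1 rho M n ^ 3 + rho n * mu1 rho M n - M * rho n = 0.
Proof.
  intros H. unfold mu1. apply epsilon_spec. apply cubic_root; auto.
Qed.

Lemma Rpower_base_lt x y a : 0 < x -> x < y -> 0 < a -> Rpower x a < Rpower y a.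
Proof.
  intros. unfold Rpower. apply exp_increasing.
  apply Rmult_lt_compat_l; auto. apply ln_increasing; auto.
Qed.

Lemma cdist_pos a b : a <> b -> 0 < cdist a b.
Proof.
  destruct a as [a1 a2], b as [b1 b2]; unfold cdist; simpl; intros H.
  apply sqrt_lt_R0.
  pose proof (pow2_ge_0 (a1 - b1)); pose proof (pow2_ge_0 (a2 - b2)).
  destruct (Req_dec a1 b1); destruct (Req_dec a2 b2).
  - subst; congruence.
  - assert (a2 - b2 <> 0) by lra.
    pose proof (Rsqr_pos_lt _ H4); unfold Rsqr in *; simpl in *; lra.
  - assert (a1 - b1 <> 0) by lra.
    pose proof (Rsqr_pos_lt _ H4); unfold Rsqr in *; simpl in *; lra.
  - assert (a1 - b1 <> 0) by lra.
    pose proof (Rsqr_pos_lt _ H4); unfold Rsqr in *; simpl in *; lra.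
Qed.

Lemma fin_min {X : Type} (L : list X) (Q : X -> Prop) (g : X -> R) :
  (forall x, In x L -> Q x -> 0 < g x) ->
  exists u, 0 < u /\ forall x, In x L -> Q x -> u <= g x.
Proof.
  induction L as [|a L IH]; intros H.
  - exists 1; split; [lra|]. intros x [].
  - destruct IH as [u [Hu Hu']].
    { intros x Hx HQ; apply H; simpl; auto. }
    destruct (classic (Q a)) as [Qa|Qa].
    + exists (Rmin u (g a)). split.
      * apply Rmin_pos; auto. apply H; simpl; auto.
      * intros x [<-|Hx] HQ.
        -- apply Rmin_r.
        -- eapply Rle_trans; [apply Rmin_l|]; auto.
    + exists u; split; auto. intros x [<-|Hx] HQ; [contradiction|auto].
Qed.

Lemma fin_min2 {X : Type} (L : list X) (P : X -> X -> Prop) (f : X -> X -> R) :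
  (forall x y, In x L -> In y L -> P x y -> 0 < f x y) ->
  exists u, 0 < u /\ forall x y, In x L -> In y L -> P x y -> u <= f x y.
Proof.
  intros H.
  destruct (fin_min (list_prod L L) (fun p => P (fst p) (snd p)) (fun p => f (fst p) (snd p)))
    as [u [Hu Hu']].
  - intros [x y] Hxy HP. apply in_prod_iff in Hxy. apply H; tauto.
  - exists u; split; auto. intros x y Hx Hy HP.
    apply (Hu' (x, y)); auto. apply in_prod_iff; auto.
Qed.

Definition ZL (N : nat) : list Z :=
  map (fun k => (Z.of_nat k - Z.of_nat N)%Z) (seq 0 (2 * N + 1)).

Lemma ZL_in N n : (Z.abs n <= Z.of_nat N)%Z -> In n (ZL N).
Proof.
  intros H. unfold ZL. apply in_map_iff. exists (Z.to_nat (n + Z.of_nat N)).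
  split.
  - lia.
  - apply in_seq. lia.
Qed.

Definition IL (N : nat) : list (Z * nat) := list_prod (ZL N) (2%nat :: 3%nat :: nil).

Lemma IL_in N n j : (Z.abs n <= Z.of_nat N)%Z -> (j = 2%nat \/ j = 3%nat) -> In (n, j) (IL N).
Proof.
  intros H Hj. unfold IL. apply in_prod_iff. split. apply ZL_in; auto.
  simpl; destruct Hj; auto.
Qed.

Lemma rho_mono (rho : nat -> R)
  (Hsimple : forall n : nat, (1 <= n)%nat -> rho n < rho (S n)) :
  forall p q, (1 <= p)%nat -> (p < q)%nat -> rho p < rho q.
Proof.
  intros p q Hp Hq. induction Hq.
  - apply Hsimple; auto.
  - eapply Rlt_trans; [apply IHHq|apply Hsimple]. lia.
Qed.

Lemma rho_inj (rho : nat -> R)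
  (Hsimple : forall n : nat, (1 <= n)%nat -> rho n < rho (S n)) :
  forall p q, (1 <= p)%nat -> (1 <= q)%nat -> rho p = rho q -> p = q.
Proof.
  intros p q Hp Hq E. destruct (Nat.lt_trichotomy p q) as [H|[H|H]]; auto.
  - pose proof (rho_mono rho Hsimple p q Hp H); lra.
  - pose proof (rho_mono rho Hsimple q p Hq H); lra.
Qed.

Definition AA (rho : nat -> R) M p := sqrt (3 * (mu1 rho M p / 2) ^ 2 + rho p).
Definition BB (rho : nat -> R) s c (p:nat) := c * Rpower (rho p) (1 / (2 * s)).

Lemma lam_p rho M s c p j : (1 <= p)%nat -> (j = 2%nat \/ j = 3%nat) ->
  lam rho M s c (Z.of_nat p) j =
  (- mu1 rho M p / 2, (if Nat.eqb j 2 then AA rho M p else - AA rho M p) + BB rho s c p).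
Proof.
  intros Hp Hj. unfold lam, AA, BB.
  replace (Z.to_nat (Z.abs (Z.of_nat p))) with p by lia.
  replace (Z.sgn (Z.of_nat p)) with 1%Z by (destruct p; [lia|reflexivity]).
  destruct Hj as [->| ->]; simpl; f_equal; ring.
Qed.

Lemma lam_n rho M s c p j : (1 <= p)%nat -> (j = 2%nat \/ j = 3%nat) ->
  lam rho M s c (- Z.of_nat p)%Z j =
  (- mu1 rho M p / 2, (if Nat.eqb j 2 then AA rho M p else - AA rho M p) - BB rho s c p).
Proof.
  intros Hp Hj. unfold lam, AA, BB.
  replace (Z.to_nat (Z.abs (- Z.of_nat p))) with p by lia.
  replace (Z.sgn (- Z.of_nat p)) with (-1)%Z by (destruct p; [lia|reflexivity]).
  destruct Hj as [->| ->]; simpl; f_equal; ring.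
Qed.

Lemma mu_inj (rho : nat -> R) M
  (HM : M <> 0)
  (Hpos : forall n : nat, (1 <= n)%nat -> 0 < rho n)
  (Hsimple : forall n : nat, (1 <= n)%nat -> rho n < rho (S n)) p q :
  (1 <= p)%nat -> (1 <= q)%nat -> mu1 rho M p = mu1 rho M q -> p = q.
Proof.
  intros Hp Hq E.
  pose proof (mu1_spec rho M p (Hpos p Hp)) as Ep.
  pose proof (mu1_spec rho M q (Hpos q Hq)) as Eq.
  rewrite E in Ep. set (x := mu1 rho M q) in *.
  assert (H0 : (rho p - rho q) * (x - M) = 0) by nra.
  apply Rmult_integral in H0. destruct H0 as [H0|H0].
  - apply (rho_inj rho Hsimple); auto; lra.
  - assert (x = M) by lra. subst x. rewrite H in Eq.
    exfalso. assert (M ^ 3 = 0) by nra.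
    exact (pow_nonzero M 3 HM H1).
Qed.

Lemma AA_pos rho M p : 0 < rho p -> 0 < AA rho M p.
Proof. intros. unfold AA. apply sqrt_lt_R0. pose proof (pow2_ge_0 (mu1 rho M p / 2)). lra. Qed.

Lemma BB_pos rho s c p : 0 < c -> 0 < BB rho s c p.
Proof. intros. unfold BB, Rpower. apply Rmult_lt_0_compat; auto. apply exp_pos. Qed.

Lemma core (rho : nat -> R) M s c
  (HM : M <> 0)
  (Hpos : forall n : nat, (1 <= n)%nat -> 0 < rho n)
  (Hsimple : forall n : nat, (1 <= n)%nat -> rho n < rho (S n))
  (Hc : 0 < c) n m j k :
  n <> 0%Z -> m <> 0%Z -> (j = 2%nat \/ j = 3%nat) -> (k = 2%nat \/ k = 3%nat) ->
  (n, j) <> (m, k) -> lam rho M s c n j = lam rho M s c m k ->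
  exists p, (1 <= p)%nat /\
    (((n, j) = (Z.of_nat p, 3%nat) /\ (m, k) = ((- Z.of_nat p)%Z, 2%nat)) \/
     ((n, j) = ((- Z.of_nat p)%Z, 2%nat) /\ (m, k) = (Z.of_nat p, 3%nat))) /\
    AA rho M p = BB rho s c p.
Proof.
  intros Hn Hm Hj Hk Hne E.
  set (p := Z.to_nat (Z.abs n)). set (q := Z.to_nat (Z.abs m)).
  assert (Hp : (1 <= p)%nat) by lia. assert (Hq : (1 <= q)%nat) by lia.
  assert (Hn' : n = Z.of_nat p \/ n = (- Z.of_nat p)%Z) by lia.
  assert (Hm' : m = Z.of_nat q \/ m = (- Z.of_nat q)%Z) by lia.
  clearbody p q.
  pose proof (AA_pos rho M p (Hpos p Hp)). pose proof (BB_pos rho s c p Hc).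
  destruct Hn' as [-> | ->]; destruct Hm' as [-> | ->];
  first [rewrite (lam_p rho M s c p j Hp Hj) in E | rewrite (lam_n rho M s c p j Hp Hj) in E];
  first [rewrite (lam_p rho M s c q k Hq Hk) in E | rewrite (lam_n rho M s c q k Hq Hk) in E];
  injection E as E1 E2;
  assert (Epq : p = q) by (apply (mu_inj rho M HM Hpos Hsimple); auto; lra);
  subst q;
  destruct Hj as [-> | ->]; destruct Hk as [-> | ->]; simpl in E2;
  try (exfalso; apply Hne; reflexivity);
  try (exfalso; lra);
  exists p; split; auto; split; try lra; auto.
Qed.
Lemma cube_lt x y : x < y -> x^3 < y^3.
Proof. intros. assert (y^3 - x^3 = (y-x)*((x + y/2)^2 + 3/4*y^2)) by field.
 assert (0 < (x + y/2)^2 + 3/4*y^2).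
 { destruct (Req_dec y 0). - subst. assert (x<>0) by lra. 
   pose proof (Rsqr_pos_lt x H1); unfold Rsqr in *; simpl; nra.
   - pose proof (Rsqr_pos_lt y H1); unfold Rsqr in *; simpl; nra. }
 nra. Qed.

Lemma mu_range_pos x a M : 0 < a -> 0 < M -> x^3 + a*x - M*a = 0 -> 0 < x < M.
Proof. intros Ha HM E. split.
 - destruct (Rle_lt_dec x 0); auto. assert (x^3 <= 0) by nra. nra.
 - destruct (Rle_lt_dec M x); auto. pose proof (cube_lt 0 M HM). assert (M^3 <= x^3) by (destruct r; [pose proof (cube_lt M x H0); lra| subst; lra]). simpl in *. nra.
Qed.
Lemma mu_range_neg x a M : 0 < a -> M < 0 -> x^3 + a*x - M*a = 0 -> M < x < 0.
Proof. intros Ha HM E. split.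
 - destruct (Rle_lt_dec x M); auto. assert (x^3 <= M^3) by (destruct r; [pose proof (cube_lt x M H); lra| subst; lra]). pose proof (cube_lt M 0 HM). simpl in *. nra.
 - destruct (Rle_lt_dec 0 x); auto. assert (0 <= x^3) by (simpl; nra). nra.
Qed.

Lemma mu_sq x y a b M : M <> 0 -> 0 < a -> a < b ->
  x^3 + a*x - M*a = 0 -> y^3 + b*y - M*b = 0 -> y^2 * a <= x^2 * b.
Proof.
  intros HM Ha Hab Ex Ey.
  assert (Hb : 0 < b) by lra.
  assert (Hxy : 0 <= M * (y - x)).
  { destruct (Rlt_or_le 0 M) as [Mp|Mn].
    - pose proof (mu_range_pos x a M Ha Mp Ex). pose proof (mu_range_pos y b M Hb Mp Ey).
      destruct (Rlt_or_le y x) as [Hl|Hl]; [|nra].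
      pose proof (cube_lt y x Hl). exfalso. nra.
    - assert (Mn' : M < 0) by lra.
      pose proof (mu_range_neg x a M Ha Mn' Ex). pose proof (mu_range_neg y b M Hb Mn' Ey).
      destruct (Rlt_or_le x y) as [Hl|Hl]; [|nra].
      pose proof (cube_lt x y Hl). exfalso. nra. }
  assert (HMM : 0 < (M - x) * (M - y)).
  { destruct (Rlt_or_le 0 M) as [Mp|Mn].
    - pose proof (mu_range_pos x a M Ha Mp Ex). pose proof (mu_range_pos y b M Hb Mp Ey). nra.
    - assert (Mn' : M < 0) by lra.
      pose proof (mu_range_neg x a M Ha Mn' Ex). pose proof (mu_range_neg y b M Hb Mn' Ey). nra. }
  assert (E1 : x^3 = a * (M - x)) by lra.
  assert (E2 : y^3 = b * (M - y)) by lra.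
  assert (D : (x^2 * b - y^2 * a) * ((M - x) * (M - y)) = x^2 * y^2 * (M * (y - x))).
  { replace ((x^2 * b - y^2 * a) * ((M - x) * (M - y))) with
      (x^2 * (b * (M - y)) * (M - x) - y^2 * (a * (M - x)) * (M - y)) by ring.
    rewrite <- E1, <- E2. ring. }
  assert (0 <= x^2 * y^2 * (M * (y - x))).
  { apply Rmult_le_pos; auto. apply Rmult_le_pos; apply pow2_ge_0. }
  destruct (Rlt_or_le (x^2 * b - y^2 * a) 0) as [Hl|Hl]; [|lra].
  exfalso. assert ((x^2 * b - y^2 * a) * ((M - x) * (M - y)) < 0) by nra. lra.
Qed.

Lemma Rpower_sq r s : 0 < r -> 0 < s ->
  Rpower r (1 / (2 * s)) * Rpower r (1 / (2 * s)) = Rpower r (1 / s).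
Proof. intros. rewrite <- Rpower_plus. f_equal. field. lra. Qed.

Lemma Rpower_split r s : 0 < r -> 0 < s ->
  Rpower r (1 - 1 / s) * (Rpower r (1 / (2 * s)) * Rpower r (1 / (2 * s))) = r.
Proof. intros. rewrite Rpower_sq, <- Rpower_plus; auto.
  replace (1 - 1/s + 1/s) with 1 by (field; lra). apply Rpower_1; auto. Qed.

Lemma Rpower_pos' r a : 0 < Rpower r a.
Proof. unfold Rpower; apply exp_pos. Qed.

Lemma V_eq (rho : nat -> R) M s p : 0 < rho p -> 0 < s ->
  sqrt (3 * (mu1 rho M p / (2 * Rpower (rho p) (1 / (2 * s)))) ^ 2
              + Rpower (rho p) (1 - 1 / s)) = AA rho M p / Rpower (rho p) (1 / (2 * s)).
Proof.
  intros Hr Hs.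
  set (P := Rpower (rho p) (1 / (2 * s))).
  assert (HP : 0 < P) by apply Rpower_pos'.
  pose proof (Rpower_split (rho p) s Hr Hs) as Hsp. fold P in Hsp.
  assert (HA := AA_pos rho M p Hr).
  assert (HA2 : AA rho M p * AA rho M p = 3 * (mu1 rho M p / 2) ^ 2 + rho p).
  { unfold AA. apply sqrt_sqrt. pose proof (pow2_ge_0 (mu1 rho M p / 2)); lra. }
  assert (Rpower (rho p) (1 - 1/s) = rho p / (P * P)).
  { apply (Rmult_eq_reg_r (P * P)); [rewrite Hsp; field; lra | nra]. }
  rewrite H.
  assert (E : 3 * (mu1 rho M p / (2 * P)) ^ 2 + rho p / (P * P) = (AA rho M p / P) ^ 2).
  { replace ((AA rho M p / P) ^ 2) with (AA rho M p * AA rho M p / (P * P)) by (field; lra).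
    rewrite HA2. field; lra. }
  rewrite E. apply sqrt_pow2. apply Rlt_le, Rdiv_lt_0_compat; auto.
Qed.

Lemma inV_iff (rho : nat -> R) M s c
  (Hpos : forall n : nat, (1 <= n)%nat -> 0 < rho n) (Hs : 0 < s) :
  inV rho M s c <-> exists p, (1 <= p)%nat /\ AA rho M p = BB rho s c p.
Proof.
  unfold inV, BB. split; intros [p [Hp E]]; exists p; split; auto.
  - rewrite V_eq in E; auto. rewrite E. field.
    pose proof (Rpower_pos' (rho p) (1 / (2 * s))); lra.
  - rewrite V_eq; auto. rewrite E. field.
    pose proof (Rpower_pos' (rho p) (1 / (2 * s))); lra.
Qed.

Lemma AB_sq rho M s c p : 0 < rho p -> 0 < s -> AA rho M p = BB rho s c p ->
  3 * (mu1 rho M p / 2) ^ 2 + rho p = c * c * (rho p * Rpower (rho p) (1 / s - 1)).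
Proof.
  intros Hr Hs E.
  assert (HA2 : AA rho M p * AA rho M p = 3 * (mu1 rho M p / 2) ^ 2 + rho p).
  { unfold AA. apply sqrt_sqrt. pose proof (pow2_ge_0 (mu1 rho M p / 2)); lra. }
  rewrite <- HA2, E. unfold BB.
  replace (rho p * Rpower (rho p) (1 / s - 1)) with
    (Rpower (rho p) (1 / (2 * s)) * Rpower (rho p) (1 / (2 * s))).
  - ring.
  - rewrite Rpower_sq; auto. rewrite <- (Rpower_1 (rho p)) at 2; auto.
    rewrite <- Rpower_plus. f_equal. ring.
Qed.

Lemma AB_lt (rho : nat -> R) M s c
  (HM : M <> 0)
  (Hpos : forall n : nat, (1 <= n)%nat -> 0 < rho n)
  (Hsimple : forall n : nat, (1 <= n)%nat -> rho n < rho (S n))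
  (Hs : 1 / 2 < s < 1) (Hc : 0 < c) p q :
  (1 <= p)%nat -> (p < q)%nat -> AA rho M p = BB rho s c p -> AA rho M q = BB rho s c q -> False.
Proof.
  intros Hp Hpq Ep Eq.
  assert (Hq : (1 <= q)%nat) by lia.
  pose proof (Hpos p Hp) as rp. pose proof (Hpos q Hq) as rq.
  pose proof (rho_mono rho Hsimple p q Hp Hpq) as Hr.
  assert (Hs0 : 0 < s) by lra.
  apply AB_sq in Ep; auto. apply AB_sq in Eq; auto.
  assert (He : 0 < 1 / s - 1).
  { assert (1 < 1 / s). { apply (Rmult_lt_reg_r s); [lra|]. field_simplify; lra. } lra. }
  pose proof (Rpower_base_lt (rho p) (rho q) (1 / s - 1) rp Hr He) as HE.
  pose proof (Rpower_pos' (rho p) (1 / s - 1)).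
  pose proof (mu_sq (mu1 rho M p) (mu1 rho M q) (rho p) (rho q) M HM rp Hr
                (mu1_spec rho M p rp) (mu1_spec rho M q rq)) as Hmu.
  set (Ep' := Rpower (rho p) (1 / s - 1)) in *.
  set (Eq' := Rpower (rho q) (1 / s - 1)) in *.
  set (x := mu1 rho M p) in *. set (y := mu1 rho M q) in *.
  assert (K : (3 * (x / 2) ^ 2 + rho p) * rho q >= (3 * (y / 2) ^ 2 + rho q) * rho p).
  { assert (3 * (x/2)^2 * rho q >= 3 * (y/2)^2 * rho p).
    { replace (3 * (x/2)^2 * rho q) with (3/4 * (x^2 * rho q)) by field.
      replace (3 * (y/2)^2 * rho p) with (3/4 * (y^2 * rho p)) by field. lra. }
    nra. }
  rewrite Ep, Eq in K.
  assert (0 < c * c * rho p * rho q) by (apply Rmult_lt_0_compat; [apply Rmult_lt_0_compat|]; nra).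
  nra.
Qed.

Lemma AB_unique (rho : nat -> R) M s c
  (HM : M <> 0)
  (Hpos : forall n : nat, (1 <= n)%nat -> 0 < rho n)
  (Hsimple : forall n : nat, (1 <= n)%nat -> rho n < rho (S n))
  (Hs : 1 / 2 < s < 1) (Hc : 0 < c) p q :
  (1 <= p)%nat -> (1 <= q)%nat -> AA rho M p = BB rho s c p -> AA rho M q = BB rho s c q -> p = q.
Proof.
  intros Hp Hq Ep Eq. destruct (Nat.lt_trichotomy p q) as [H|[H|H]]; auto; exfalso.
  - exact (AB_lt rho M s c HM Hpos Hsimple Hs Hc p q Hp H Ep Eq).
  - exact (AB_lt rho M s c HM Hpos Hsimple Hs Hc q p Hq H Eq Ep).
Qed.

Theorem lemma3p8
  (s M gamma c : R) (rho : nat -> R)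
  (Hs : 1 / 2 < s < 1)
  (HM : M <> 0)
  (Hpos : forall n : nat, (1 <= n)%nat -> 0 < rho n)
  (Hsimple : forall n : nat, (1 <= n)%nat -> rho n < rho (S n))
  (Hinf : forall K : R, exists n : nat, (1 <= n)%nat /\ K < rho n)
  (Hgamma : PI / 2 <= gamma)
  (Hgap : exists n0 : nat, forall n : nat, (n0 <= n)%nat -> (1 <= n)%nat ->
            Rpower (rho (S n)) (1 / (2 * s)) - Rpower (rho n) (1 / (2 * s)) >= gamma)
  (Hc : 0 < c /\ c <> gamma) :
  (~ inV rho M s c ->
   forall N : nat, (1 <= N)%nat ->
   exists ups : R, 0 < ups /\
     forall (n m : Z) (j k : nat),
       n <> 0%Z -> m <> 0%Z ->
       (Z.abs n <= Z.of_nat N)%Z -> (Z.abs m <= Z.of_nat N)%Z ->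
       (j = 2%nat \/ j = 3%nat) -> (k = 2%nat \/ k = 3%nat) ->
       (n, j) <> (m, k) ->
       ups <= cdist (lam rho M s c n j) (lam rho M s c m k))
  /\
  (inV rho M s c ->
   exists nc : nat,
     ((1 <= nc)%nat /\
      lam rho M s c (- Z.of_nat nc)%Z 2 = lam rho M s c (Z.of_nat nc) 3 /\
      (forall nc' : nat, (1 <= nc')%nat ->
         lam rho M s c (- Z.of_nat nc')%Z 2 = lam rho M s c (Z.of_nat nc') 3 ->
         nc' = nc)) /\
     forall N : nat, (1 <= N)%nat ->
     exists ups : R, 0 < ups /\
       forall (n m : Z) (j k : nat),
         n <> 0%Z -> m <> 0%Z ->
         (Z.abs n <= Z.of_nat N)%Z -> (Z.abs m <= Z.of_nat N)%Z ->
         (j = 2%nat \/ j = 3%nat) -> (k = 2%nat \/ k = 3%nat) ->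
         (n, j) <> (m, k) ->
         ~ (((n, j) = ((- Z.of_nat nc)%Z, 2%nat) /\ (m, k) = (Z.of_nat nc, 3%nat)) \/
            ((n, j) = (Z.of_nat nc, 3%nat) /\ (m, k) = ((- Z.of_nat nc)%Z, 2%nat))) ->
         ups <= cdist (lam rho M s c n j) (lam rho M s c m k)).
Proof.
  destruct Hc as [Hc0 _].
  assert (Hs0 : 0 < s) by lra.
  split.
  - intros HnV N HN.
    destruct (fin_min2 (IL N)
      (fun x y => fst x <> 0%Z /\ fst y <> 0%Z /\ (snd x = 2%nat \/ snd x = 3%nat) /\
                  (snd y = 2%nat \/ snd y = 3%nat) /\ x <> y)
      (fun x y => cdist (lam rho M s c (fst x) (snd x)) (lam rho M s c (fst y) (snd y))))
      as [u [Hu Hu']].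
    + intros [n j] [m k] _ _ (Hn & Hm & Hj & Hk & Hne); simpl in *.
      apply cdist_pos. intro E.
      destruct (core rho M s c HM Hpos Hsimple Hc0 n m j k Hn Hm Hj Hk Hne E)
        as [p [Hp [_ HAB]]].
      apply HnV. apply inV_iff; eauto.
    + exists u; split; auto. intros n m j k Hn Hm HnN HmN Hj Hk Hne.
      apply (Hu' (n, j) (m, k)); try apply IL_in; auto; simpl; tauto.
  - intros HV. pose proof HV as HV'. apply inV_iff in HV as [p [Hp E]]; auto.
    exists p. split; [split; [auto|split]|].
    + rewrite lam_n, lam_p; auto. simpl. f_equal. lra.
    + intros nc' Hnc' E'. rewrite lam_n, lam_p in E'; auto. simpl in E'.
      injection E' as E2.
      apply (AB_unique rho M s c HM Hpos Hsimple Hs Hc0); auto. lra.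
    + intros N HN.
      destruct (fin_min2 (IL N)
        (fun x y => fst x <> 0%Z /\ fst y <> 0%Z /\ (snd x = 2%nat \/ snd x = 3%nat) /\
                    (snd y = 2%nat \/ snd y = 3%nat) /\ x <> y /\
         ~ ((x = ((- Z.of_nat p)%Z, 2%nat) /\ y = (Z.of_nat p, 3%nat)) \/
            (x = (Z.of_nat p, 3%nat) /\ y = ((- Z.of_nat p)%Z, 2%nat))))
        (fun x y => cdist (lam rho M s c (fst x) (snd x)) (lam rho M s c (fst y) (snd y))))
        as [u [Hu Hu']].
      * intros [n j] [m k] _ _ (Hn & Hm & Hj & Hk & Hne & Hex); simpl in *.
        apply cdist_pos. intro E'.
        destruct (core rho M s c HM Hpos Hsimple Hc0 n m j k Hn Hm Hj Hk Hne E')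
          as [p' [Hp' [Hpair HAB]]].
        assert (p' = p) by (apply (AB_unique rho M s c HM Hpos Hsimple Hs Hc0); auto).
        subst p'. apply Hex. tauto.
      * exists u; split; auto. intros n m j k Hn Hm HnN HmN Hj Hk Hne Hex.
        apply (Hu' (n, j) (m, k)); try apply IL_in; auto; simpl; tauto.
Qed.
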